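(* Let $\varphi$ be an instance of 2-Clause 3-SAT and let $G(\varphi)$ be the graph constructed from $\varphi$ as described in the context. If $\varphi$ is satisfiable, then $\mathrm{wcol}_2(G(\varphi)) \leq 5$.
   Context: 2-Clause 3-SAT: given a CNF formula $\varphi$ with clauses $c_1,\dots,c_m$ over variables $x_1,\dots,x_n$ in which each clause contains at most 3 literals and each literal ($x_j$ or $\overline{x}_j$) appears in exactly 2 clauses, decide whether $\varphi$ is satisfiable. It is assumed throughout that no variable appears twice in a single clause and that there are no clauses with a single literal (so each clause has 2 or 3 literals). Construction of $G(\varphi)$: for each clause $c_i$ create 6 vertices $u_i^1,\dots,u_i^6$. If $c_i$ contains only 2 literals, add 2 more vertices $f_i, f'_i$, each adjacent to all of $u_i^1,\dots,u_i^6$. For each variable $x_j$ create two vertices $v_j$ and $v'_j$ (for the literals $x_j$ and $\overline{x}_j$) joined by an edge. For each clause $c_i$ containing the literal $x_j$, add an edge from $v_j$ to each of $u_i^1,\dots,u_i^6$; for each clause $c_i$ containing $\overline{x}_j$, add an edge from $v'_j$ to each of $u_i^1,\dots,u_i^6$. Weak coloring numbers: for a graph $G=(V,E)$ and a total order $\sigma$ of $V$, a vertex $v\neq u$ is weakly $r$-reachable from $u$ if $u <_\sigma v$ and there is a $u$–$v$ path $P$ of length at most $r$ such that every vertex $p$ of $P$ other than $u,v$ satisfies $p <_\sigma v$. Let $\mathrm{wreach}_r(u,G_\sigma)$ be the set of such $v$. Then $\mathrm{wcol}_r(G)=\min_\sigma \max_{u\in V}|\mathrm{wreach}_r(u,G_\sigma)|$,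 the minimum over all total orders of $V$. (A vertex is not considered reachable from itself.) *)

(* Defs.v *)
From mathcomp Require Import all_boot.
From mathcomp Require Import boolp.
Set Implicit Arguments. Unset Strict Implicit. Unset Printing Implicit Defensive.

(* A literal over variables x_0..x_{n-1}: (j, true) is x_j, (j, false) is ~x_j.
   A formula with m clauses is a map cl : 'I_m -> {set literal}. *)
Definition literal (n : nat) := ('I_n * bool)%type.

Definition is_2c3sat (n m : nat) (cl : 'I_m -> {set literal n}) : Prop :=
  (forall i, #|cl i| = 2 \/ #|cl i| = 3) /\
  (forall i (j : 'I_n), ~ ((j, true) \in cl i /\ (j, false) \in cl i)) /\
  (forall l : literal n, #|[set i | l \in cl i]| = 2).

Definition satisfiable (n m : nat) (cl : 'I_m -> {set literal n}) : Prop :=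
  exists a : 'I_n -> bool, forall i, exists2 l, l \in cl i & a l.1 = l.2.

(* raw vertices:  inl (inl (i,k)) = u_i^{k+1} (k < 6),
                  inl (inr (i,b)) = f_i (b=true) / f'_i (b=false),
                  inr (j,b)       = v_j (b=true) / v'_j (b=false). *)
Definition rawV (n m : nat) :=
  ((('I_m * 'I_6) + ('I_m * bool)) + ('I_n * bool))%type.

Definition presentV (n m : nat) (cl : 'I_m -> {set literal n}) (x : rawV n m) : bool :=
  match x with
  | inl (inr (i, _)) => #|cl i| == 2
  | _ => true
  end.

Definition GV (n m : nat) (cl : 'I_m -> {set literal n}) :=
  {x : rawV n m | presentV cl x}.

Definition rawadj (n m : nat) (cl : 'I_m -> {set literal n}) (x y : rawV n m) : bool :=
  match x, y with
  | inl (inl (i, _)), inl (inr (i', _)) => i == i'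
  | inl (inr (i, _)), inl (inl (i', _)) => i == i'
  | inr (j, b), inr (j', b') => (j == j') && (b != b')
  | inr l, inl (inl (i, _)) => l \in cl i
  | inl (inl (i, _)), inr l => l \in cl i
  | _, _ => false
  end.

Definition Gadj (n m : nat) (cl : 'I_m -> {set literal n}) : rel (GV cl) :=
  fun x y => rawadj cl (val x) (val y).

(* A total order sigma of V is given by an injective rank function
   f : V -> 'I_#|V|  (u <_sigma v  iff  f u < f v). *)
(* v is weakly r-reachable from u: u <_sigma v and there is a u-v path
   u = p_0, p_1, ..., p_k = v (distinct vertices, consecutive adjacent)
   of length k <= r whose inner vertices are all <_sigma v. *)
Definition wreachable (V : finType) (e : rel V) (f : V -> nat) (r : nat)
    (u v : V) : Prop :=
  f u < f v /\
  exists s : seq V,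
    [/\ path e u s, last u s = v, uniq (u :: s), size s <= r &
        all (fun p => f p < f v) (take (size s).-1 s)].

Definition wreach (V : finType) (e : rel V) (f : V -> nat) (r : nat) (u : V)
  : {set V} := [set v | `[< wreachable e f r u v >]].

Definition wcol (V : finType) (e : rel V) (r : nat) : nat :=
  \big[minn/#|V|]_(f : {ffun V -> 'I_#|V|} | injectiveb f)
     \max_(u : V) #|wreach e (fun x => nat_of_ord (f x)) r u|.

(* Main.v *)
Require Import Defs.
From mathcomp Require Import zify.
From mathcomp Require Import all_boot.
From mathcomp Require Import boolp.
Set Implicit Arguments. Unset Strict Implicit. Unset Printing Implicit Defensive.

Lemma bigmin_le (I : finType) (P : pred I) (F : I -> nat) x0 i0 :
  P i0 -> \big[minn/x0]_(i | P i) F i <= F i0.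
Proof.
move=> Pi0; have : i0 \in index_enum I by exact: mem_index_enum.
elim: (index_enum I) => [//|j r IH]; rewrite inE big_cons.
case/orP=> [/eqP <-|/IH H]; first by rewrite Pi0 geq_minl.
case: (P j) => //; exact: leq_trans (geq_minr _ _) H.
Qed.

Definition rk (V : finType) (k : V -> nat) (x : V) := #|[set y | k y < k x]|.

Lemma rk_lt (V : finType) (k : V -> nat) x : rk k x < #|V|.
Proof.
apply: proper_card; apply/properP; split; first exact: subset_predT.
by exists x => //; rewrite inE ltnn.
Qed.

Lemma rk_mono (V : finType) (k : V -> nat) x y : k x < k y -> rk k x < rk k y.
Proof.
move=> lt; apply: proper_card; apply/properP; split.
  by apply/subsetP=> z; rewrite !inE => /ltn_trans; apply.
by exists x; rewrite !inE ?ltnn.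
Qed.

Lemma rk_refl (V : finType) (k : V -> nat) x y : rk k x < rk k y -> k x < k y.
Proof.
rewrite !ltnNge; apply: contra => le.
apply: subset_leq_card; apply/subsetP=> z; rewrite !inE => /leq_trans; apply.
exact: le.
Qed.

Lemma rk_inj (V : finType) (k : V -> nat) : injective k -> injective (rk k).
Proof.
move=> ik x y E; case: (ltngtP (k x) (k y)) => [/rk_mono|/rk_mono|/ik //];
  by rewrite E ltnn.
Qed.

Lemma wcol_le (V : finType) (e : rel V) r (k : V -> nat) b :
  injective k -> (forall u, #|wreach e (rk k) r u| <= b) -> wcol e r <= b.
Proof.
move=> ik H.
pose F := [ffun x => Ordinal (rk_lt k x)].
have iF : injectiveb F.
  apply/injectiveP => x y; rewrite !ffunE => /(congr1 val) /=; exact: rk_inj.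
apply: leq_trans (bigmin_le _ _ iF) _.
have -> : (fun x => nat_of_ord (F x)) = rk k by apply: funext => x; rewrite ffunE.
by apply/bigmax_leqP => u _; apply: H.
Qed.

Lemma wreach_cases (V : finType) (e : rel V) (f : V -> nat) x v :
  v \in wreach e f 2 x -> f x < f v /\
  (e x v \/ exists w, [/\ e x w, e w v, v != x & f w < f v]).
Proof.
rewrite inE => /asboolP [lt [s [p l u sz al]]]; split => //.
case: s p l u sz al => [|w [|v' [|z s]]] //=.
- by move=> _ E; rewrite E ltnn in lt.
- by rewrite andbT => exv <-; left.
move=> /and3P [xw wv _] <- /and3P [] ; rewrite !inE negb_or => /andP [xw' xv'] _ _ _.
rewrite andbT => fw; right; exists w; split => //; by rewrite eq_sym.
Qed.

Definition vcat (n m : nat) (a : 'I_n -> bool) (x : rawV n m) : nat :=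
  match x with
  | inl (inl _) => 0
  | inl (inr _) => 1
  | inr (j, b) => if a j == b then 3 else 2
  end.

Definition key (n m : nat) (cl : 'I_m -> {set literal n}) (a : 'I_n -> bool)
  (x : GV cl) : nat :=
  vcat a (val x) * #|{: rawV n m}| + enum_rank (val x).

Lemma key_inj n m cl a : injective (@key n m cl a).
Proof.
move=> x y; rewrite /key => E.
have E2 := congr1 (modn^~ #|{: rawV n m}|) E; rewrite /= !modnMDl !modn_small // in E2.
by apply: val_inj; apply: enum_rank_inj; apply: ord_inj.
Qed.

Lemma key_cat n m cl a (x y : GV cl) :
  @key n m cl a x < key a y -> vcat a (val x) <= vcat a (val y).
Proof.
rewrite /key; move: (vcat a (val x)) (vcat a (val y)) => cx cy.
have := ltn_ord (enum_rank (val x)); have := ltn_ord (enum_rank (val y)).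
move: (nat_of_ord _) (nat_of_ord _) => ry rx; move: #|_| => K.
move=> hy hx H; rewrite leqNgt; apply/negP => lt.
have : (cy.+1) * K <= cx * K by apply: leq_mul.
nia.
Qed.

Lemma cardU_le (T : finType) (A B : {set T}) : #|A :|: B| <= #|A| + #|B|.
Proof. by rewrite cardsU leq_subr. Qed.

Lemma cards2_le (T : finType) (x y : T) : #|[set x; y]| <= 2.
Proof. by rewrite cards2; case: (_ != _). Qed.

Definition lit n m (l : literal n) : rawV n m := inr l.
Definition fv n m (i : 'I_m) (b : bool) : rawV n m := inl (inr (i, b)).

Lemma card_le3 n m (cl : 'I_m -> {set literal n}) i :
  is_2c3sat cl -> #|cl i| <= 3.
Proof. by case=> [H _]; case: (H i) => ->. Qed.

Ltac kc := try (case: ifP => _; rewrite /= ?ltn0 //).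

Lemma raw_bound n m (cl : 'I_m -> {set literal n}) (a : 'I_n -> bool) :
  is_2c3sat cl -> (forall i, exists2 l, l \in cl i & a l.1 = l.2) ->
  forall xr : rawV n m, presentV cl xr ->
  exists S : {set rawV n m}, #|S| <= 5 /\
   forall vr wr, presentV cl vr -> vcat a xr <= vcat a vr ->
    (rawadj cl xr vr \/ [/\ rawadj cl xr wr, rawadj cl wr vr, vr != xr & vcat a wr <= vcat a vr]) ->
    vr \in S.
Proof.
move=> H2 Ha [[[i k]|[i b]]|[j b]] /= pres.
-
  pose A := [set lit m l | l in cl i].
  pose B := if #|cl i| == 2 then [set fv n i true; fv n i false] else set0.
  pose C := [set lit m (l.1, ~~ l.2) | l in [set l in cl i | a l.1 != l.2]].
  exists (A :|: B :|: C); split.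
    have cA : #|A| <= #|cl i| by apply: leq_imset_card.
    have cB : #|B| <= (if #|cl i| == 2 then 2 else 0).
      rewrite /B; case: ifP => _; last by rewrite cards0.
      by rewrite cards2; case: (_ != _).
    have cC : #|C| <= #|cl i| - 1.
      apply: leq_trans (leq_imset_card _ _) _.
      case: (Ha i) => l0 l0in al0.
      have -> : #|cl i| - 1 = #|cl i :\ l0| by rewrite (cardsD1 l0) l0in add1n subn1.
      apply: subset_leq_card; apply/subsetP => l; rewrite !inE => /andP [lin al].
      rewrite lin andbT; apply: contraNneq al => ->; exact/eqP.
    have := card_le3 i H2.
    case: H2 => [Hc _]; case: (Hc i) => E; rewrite E /= in cA cB cC *;
    move=> _; apply: leq_trans (cardU_le _ _) _;
    apply: leq_trans (leq_add (cardU_le _ _) (leqnn _)) _;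
    exact: leq_trans (leq_add (leq_add cA cB) cC) _.
  move=> [[[i' k']|[i' b']]|[j' b']] wr /= pv cx.
  + case=> [//|[]]; case: wr => [[[? ?]|[? ?]]|[? ?]] //= _ _ _; kc.
  + case=> [/eqP ei|[]].
      by subst i'; rewrite /B pv !inE; case: b'; rewrite eqxx ?orbT.
    by case: wr => [[[? ?]|[? ?]]|[? ?]] //= _ _ _; kc.
  + case=> [lin|[]].
      by rewrite !inE; apply/orP; left; apply/orP; left; apply/imsetP; exists (j', b').
    case: wr => [[[? ?]|[? ?]]|[j'' b'']] //= lin /andP [/eqP ejj nbb] _.
    subst j''.
    have nb : b' = ~~ b'' by move: nbb; case: (b') (b'') => [] [].
    subst b'; case: (a j' =P b'') => [E|nab]; first by rewrite E; case: (b'').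
    move=> _; rewrite !inE; apply/orP; right; apply/imsetP; exists (j', b'') => //.
    by rewrite !inE lin; apply/eqP.
-
  exists ([set lit m l | l in cl i] :|: [set fv n i true; fv n i false]); split.
    apply: leq_trans (cardU_le _ _) _.
    have := leq_imset_card (@lit n m) (cl i); rewrite (eqP pres) => h.
    exact: leq_trans (leq_add h (cards2_le _ _)) _.
  move=> [[[i' k']|[i' b']]|[j' b']] wr /= pv cx //.
  + case=> [//|[]]; case: wr => [[[? ?]|[? ?]]|[? ?]] //= /eqP <- /eqP <- _ _.
    by rewrite !inE; case: b'; rewrite eqxx ?orbT.
  + case=> [//|[]]; case: wr => [[[? ?]|[? ?]]|[? ?]] //= /eqP <- lin _ _.
    by rewrite !inE; apply/orP; left; apply/imsetP; exists (j', b').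
-
  case: H2 => [Hc [Hnot Hl]].
  have /cards2P [i1 [i2 [_ E12]]] : #|[set i | (j, b) \in cl i]| == 2 by rewrite Hl.
  have inI : forall i, (j, b) \in cl i -> (i == i1) || (i == i2).
    by move=> i lin; rewrite -in_set2 -E12 inE.
  have lin1 : (j, b) \in cl i1.
    have : i1 \in [set i | (j, b) \in cl i] by rewrite E12 !inE eqxx.
    by rewrite inE.
  have lin2 : (j, b) \in cl i2.
    have : i2 \in [set i | (j, b) \in cl i] by rewrite E12 !inE eqxx orbT.
    by rewrite inE.
  exists ([set lit m (j, ~~ b)] :|: [set lit m l | l in cl i1 :\ (j, b)]
          :|: [set lit m l | l in cl i2 :\ (j, b)]); split.
    apply: leq_trans (cardU_le _ _) _.
    apply: leq_trans (leq_add (cardU_le _ _) (leqnn _)) _.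
    rewrite cards1.
    have c1 := leq_imset_card (@lit n m) (cl i1 :\ (j, b)).
    have c2 := leq_imset_card (@lit n m) (cl i2 :\ (j, b)).
    have d1 := cardsD1 (j, b) (cl i1); rewrite lin1 /= in d1.
    have d2 := cardsD1 (j, b) (cl i2); rewrite lin2 /= in d2.
    have e1 := card_le3 i1 (conj Hc (conj Hnot Hl)).
    have e2 := card_le3 i2 (conj Hc (conj Hnot Hl)).
    have h1 : #|cl i1 :\ (j, b)| <= 2 by move: e1; rewrite d1 add1n ltnS.
    have h2 : #|cl i2 :\ (j, b)| <= 2 by move: e2; rewrite d2 add1n ltnS.
    exact: leq_trans (leq_add (leq_add (leqnn 1) (leq_trans c1 h1)) (leq_trans c2 h2)) _.
  move=> [[[i' k']|[i' b']]|[j' b']] wr /= pv cx //.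
  + by move: cx; case: (a j == b).
  + by move: cx; case: (a j == b).
  case=> [/andP [/eqP <- nbb]|[]].
    have -> : b' = ~~ b by move: nbb; case: (b) (b') => [] [].
    by rewrite !inE eqxx.
  case: wr => [[[i'' k'']|[? ?]]|[j'' b'']] //=.
  + move=> lin lin' vne _.
    have ne : (j', b') != (j, b) by apply: contra vne => /eqP [-> ->].
    case/orP: (inI _ lin) => /eqP ei; subst i''; rewrite !inE; apply/orP.
      by left; apply/orP; right; apply/imsetP; exists (j', b'); rewrite // !inE ne.
    by right; apply/imsetP; exists (j', b'); rewrite // !inE ne.
  + move=> /andP [/eqP e1 n1] /andP [/eqP e2 n2]; subst.
    have : b' = b by move: n1 n2; case: (b) (b') (b'') => [] [] [].
    by move=> ->; rewrite eqxx.
Qed.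

Theorem lemma3p2 (n m : nat) (cl : 'I_m -> {set literal n}) :
  is_2c3sat cl -> satisfiable cl -> wcol (@Gadj n m cl) 2 <= 5.
Proof.
move=> H2 [a Ha].
apply: (@wcol_le _ _ _ (@key n m cl a)); first exact: key_inj.
move=> u.
have [S [cS HS]] := raw_bound H2 Ha (valP u).
apply: leq_trans cS.
rewrite -(card_imset _ val_inj); apply: subset_leq_card.
apply/subsetP => _ /imsetP [v vin ->].
have [lt hc] := wreach_cases vin.
have cuv := key_cat (rk_refl lt).
case: hc => [adj|[w [uw wv vu fw]]].
  by apply: (HS _ (val u) (valP v) cuv); left.
apply: (HS _ (val w) (valP v) cuv); right; split => //.
exact: key_cat (rk_refl fw).
Qed.
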